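(* Let $G$ be a connected unicyclic bipartite graph with $n$ vertices. Then $$EE(G) \ge 2\cosh(2) + (n-2),$$ with equality if and only if $G\cong C_4$.
   Context: All graphs are finite, simple and undirected. For a graph $G$ with adjacency matrix $A(G)$ having eigenvalues $\lambda_1\ge\cdots\ge\lambda_n$, the Estrada index is $EE(G)=\sum_{i=1}^n e^{\lambda_i}$. A connected graph is unicyclic if it contains exactly one cycle. $C_4$ is the cycle on 4 vertices. *)

(* Defs.v *)
From Stdlib Require Import Reals Lra Lia Arith List Relation_Operators.
Import ListNotations.
Open Scope R_scope.

(* A finite simple graph on vertex set {0,...,n-1}: adjacency is a boolean
   relation, symmetric and irreflexive on the vertex set (values outside
   {0..n-1} are irrelevant). *)
Record graph := Graph {
  gn : nat;
  gadj : nat -> nat -> bool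
}.

Definition simple_graph (G : graph) : Prop :=
  (forall u v, (u < gn G)%nat -> (v < gn G)%nat -> gadj G u v = gadj G v u) /\
  (forall u, (u < gn G)%nat -> gadj G u u = false).

Definition edge (G : graph) (u v : nat) : Prop :=
  (u < gn G)%nat /\ (v < gn G)%nat /\ gadj G u v = true.

Definition connected (G : graph) : Prop :=
  forall u v, (u < gn G)%nat -> (v < gn G)%nat ->
    clos_refl_trans nat (edge G) u v.

Definition is_cycle (G : graph) (c : list nat) : Prop :=
  (3 <= length c)%nat /\ NoDup c /\
  (forall i, (i < length c)%nat ->
     edge G (nth i c 0%nat) (nth ((i + 1) mod length c) c 0%nat)).

Definition cycle_edge (c : list nat) (u v : nat) : Prop :=
  exists i, (i < length c)%nat /\
    let a := nth i c 0%nat in let b := nth ((i + 1) mod length c) c 0%nat in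
    ((u = a /\ v = b) \/ (u = b /\ v = a)).

(* Exactly one cycle (cycles identified by their edge sets). *)
Definition unicyclic (G : graph) : Prop :=
  connected G /\
  exists c, is_cycle G c /\
    forall c', is_cycle G c' -> forall u v, cycle_edge c u v <-> cycle_edge c' u v.

Definition bipartite (G : graph) : Prop :=
  exists col : nat -> bool, forall u v, edge G u v -> col u <> col v.

Definition adj_matrix (G : graph) (i j : nat) : R :=
  if gadj G i j then 1 else 0.

Definition minor (M : nat -> nat -> R) (j : nat) : nat -> nat -> R :=
  fun r c => M (S r) (if (c <? j)%nat then c else S c).

Fixpoint det (n : nat) (M : nat -> nat -> R) : R :=
  match n with
  | O => 1
  | S m => fold_right Rplus 0
             (map (fun j => (-1) ^ j * M O j * det m (minor M j)) (seq 0 (S m)))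
  end.

Definition charpoly_at (n : nat) (M : nat -> nat -> R) (x : R) : R :=
  det n (fun i j => (if (i =? j)%nat then x else 0) - M i j).

(* lam is the list of eigenvalues of M, with multiplicity:
   det(xI - M) = prod_i (x - lam_i) for all real x. *)
Definition is_spectrum (n : nat) (M : nat -> nat -> R) (lam : list R) : Prop :=
  length lam = n /\
  forall x, charpoly_at n M x = fold_right Rmult 1 (map (fun l => x - l) lam).

Definition estrada_of (lam : list R) : R := fold_right Rplus 0 (map exp lam).

Definition C4 : graph :=
  Graph 4 (fun i j => orb (j =? (i + 1) mod 4)%nat (i =? (j + 1) mod 4)%nat).

Definition isomorphic (G H : graph) : Prop :=
  gn G = gn H /\
  exists f : nat -> nat,
    (forall u, (u < gn G)%nat -> (f u < gn H)%nat) /\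
    (forall u v, (u < gn G)%nat -> (v < gn G)%nat -> f u = f v -> u = v) /\
    (forall u v, (u < gn G)%nat -> (v < gn G)%nat ->
       gadj G u v = gadj H (f u) (f v)).

(* Main.v *)
Require Import Defs.
From Coquelicot Require Import Coquelicot.
From Stdlib Require Import Reals List Arith Lia Lra Relations Classical ClassicalEpsilon.
Open Scope R_scope.

Section Calc.
Local Open Scope R_scope.

Lemma cont_of_der (f df : R -> R) :
  (forall x, is_derive f x (df x)) -> forall y, continuity_pt f y.
Proof.
intros Hd y. apply continuity_pt_filterlim. apply (@ex_derive_continuous R_AbsRing R_NormedModule).
exists (df y); apply Hd.
Qed.

Lemma mvt_sign (f df : R -> R) :
  (forall x, is_derive f x (df x)) -> f 0 = 0 ->
  (forall x, 0 <= df x) -> forall x, 0 <= x * f x.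
Proof.
intros Hd H0 Hp x.
destruct (MVT_gen f 0 x df) as [c [_ Hc2]].
- intros; apply Hd.
- intros; apply (cont_of_der f df Hd).
- rewrite H0 in Hc2. replace (f x) with (df c * x) by lra.
  specialize (Hp c). nra.
Qed.

Lemma mvt_pos (f df : R -> R) :
  (forall x, is_derive f x (df x)) -> f 0 = 0 ->
  (forall x, 0 <= x -> 0 <= df x) -> (forall x, x <= 0 -> df x <= 0) ->
  forall x, 0 <= f x.
Proof.
intros Hd H0 Hp Hn x.
destruct (MVT_gen f 0 x df) as [c [Hc1 Hc2]].
- intros; apply Hd.
- intros; apply (cont_of_der f df Hd).
- rewrite H0 in Hc2. replace (f x) with (df c * x) by lra.
  destruct (Rle_dec 0 x) as [Hx|Hx].
  + rewrite Rmin_left in Hc1 by lra. rewrite Rmax_right in Hc1 by lra.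
    specialize (Hp c ltac:(lra)). nra.
  + rewrite Rmin_right in Hc1 by lra. rewrite Rmax_left in Hc1 by lra.
    specialize (Hn c ltac:(lra)). nra.
Qed.

Definition h1 x := exp x - 1 - x.
Definition h2 x := exp x - 1 - x - x^2/2.
Definition h3 x := exp x - 1 - x - x^2/2 - x^3/6.
Definition h4 x := exp x - 1 - x - x^2/2 - x^3/6 - x^4/24.
Definition h5 x := exp x - 1 - x - x^2/2 - x^3/6 - x^4/24 - x^5/120.

Lemma h1_pos x : 0 <= h1 x.
Proof. unfold h1. pose proof (exp_ineq1_le x). lra. Qed.

Lemma h2_sign x : 0 <= x * h2 x.
Proof.
apply (mvt_sign h2 h1); [|unfold h2; rewrite exp_0; field|apply h1_pos].
intros y. unfold h2, h1. auto_derive; [auto| field].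
Qed.

Lemma h3_pos x : 0 <= h3 x.
Proof.
apply (mvt_pos h3 h2).
- intros y. unfold h3, h2. auto_derive; [auto| field].
- unfold h3; rewrite exp_0; field.
- intros y Hy. pose proof (h2_sign y). destruct (Req_dec y 0) as [->|]. 
  + unfold h2; rewrite exp_0; lra.
  + assert (0 < y) by lra. nra.
- intros y Hy. pose proof (h2_sign y). destruct (Req_dec y 0) as [->|]. 
  + unfold h2; rewrite exp_0; lra.
  + assert (y < 0) by lra. nra.
Qed.

Lemma h4_sign x : 0 <= x * h4 x.
Proof.
apply (mvt_sign h4 h3); [|unfold h4; rewrite exp_0; field|apply h3_pos].
intros y. unfold h4, h3. auto_derive; [auto| field].
Qed.

Lemma h5_pos x : 0 <= h5 x.
Proof.
apply (mvt_pos h5 h4).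
- intros y. unfold h5, h4. auto_derive; [auto| field].
- unfold h5; rewrite exp_0; field.
- intros y Hy. pose proof (h4_sign y). destruct (Req_dec y 0) as [->|]. 
  + unfold h4; rewrite exp_0; lra.
  + assert (0 < y) by lra. nra.
- intros y Hy. pose proof (h4_sign y). destruct (Req_dec y 0) as [->|]. 
  + unfold h4; rewrite exp_0; lra.
  + assert (y < 0) by lra. nra.
Qed.

Lemma cosh_bound x : 5/6 + 2/3 * x^2 <= cosh x.
Proof.
pose proof (h5_pos x). pose proof (h5_pos (-x)). unfold h5 in *. unfold cosh.
assert (0 <= (x^2-2)^2) by apply pow2_ge_0. lra.
Qed.

Lemma cosh2_bound : exp 2 + exp (-2) < 47/6.
Proof.
pose proof (h5_pos (-(1/2))) as Ha. pose proof (h5_pos 2) as Hb. unfold h5 in *.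
set (a := exp (- (1/2))) in *. 
assert (Hab : a*a*a*a * exp 2 = 1).
{ unfold a. rewrite <- !exp_plus. replace (_ + _ + _ + _ + 2) with 0 by field.
  apply exp_0. }
assert (Hc : exp (-2) * exp 2 = 1). { rewrite <- exp_plus. replace (-2+2) with 0 by ring. apply exp_0. }
assert (Ha' : 0.606 <= a) by lra.
assert (Hb' : 7 <= exp 2) by lra.
assert (exp (-2) <= 1/7).
{ assert (0 < exp (-2)) by apply exp_pos.  apply (Rmult_le_reg_r 7); [lra|]. nra. }
assert (a*a*a*a >= 0.134) by (assert (a*a >= 0.36) by nra; nra).
assert (exp 2 <= 7.47).
{ assert (0 < exp 2) by apply exp_pos. set (q := a*a*a*a) in *.
  assert ((q - 0.134) * exp 2 >= 0) by (apply Rle_ge, Rmult_le_pos; lra). lra. }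
lra.
Qed.

End Calc.

Section Graph.
Local Open Scope nat_scope.

Lemma fun_choice {A B : Type} (P : A -> B -> Prop) :
  (forall a, exists b, P a b) -> exists f, forall a, P a (f a).
Proof.
intros H. exists (fun a => proj1_sig (constructive_indefinite_description _ (H a))).
intros a. exact (proj2_sig (constructive_indefinite_description _ (H a))).
Qed.

Lemma min_ex (P : nat -> Prop) : (exists k, P k) -> exists k, P k /\ forall j, P j -> k <= j.
Proof.
intros [k Hk]. apply NNPP. intros Hn.
assert (forall m, forall j, j <= m -> ~ P j).
{ induction m as [|m IH]; intros j Hj Pj.
  - apply Hn. exists j. split; [exact Pj|]. intros; lia.
  - apply Hn. exists j. split; [exact Pj|]. intros j' Pj'.
    destruct (le_lt_dec j j') as [|Hlt]; [lia|]. exfalso. apply (IH j'); [lia|exact Pj']. }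
apply (H k k); auto.
Qed.

Lemma mod_step (L i : nat) : 3 <= L -> i < L -> ((i + 1) mod L + 1) mod L <> i.
Proof.
intros HL Hi.
destruct (Nat.eq_dec (i+1) L) as [E|E].
- rewrite E, Nat.Div0.mod_same. rewrite Nat.mod_small by lia. lia.
- rewrite (Nat.mod_small (i+1)) by lia.
  destruct (Nat.eq_dec (i+1+1) L) as [E2|E2].
  + rewrite E2, Nat.Div0.mod_same. lia.
  + rewrite Nat.mod_small by lia. lia.
Qed.

Fixpoint reach (G : graph) (c : list nat) (k v : nat) : Prop :=
  match k with
  | O => In v c
  | S k' => exists w, edge G v w /\ reach G c k' w
  end.

Lemma cycle_in_lt G c x : is_cycle G c -> In x c -> x < gn G.
Proof.
intros [HL [HN He]] Hx. destruct (In_nth _ _ 0 Hx) as [i [Hi <-]].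
destruct (He i Hi) as [H _]. exact H.
Qed.

Lemma reach_ex G c v : connected G -> is_cycle G c -> v < gn G -> exists k, reach G c k v.
Proof.
intros Hc Hcy Hv.
assert (Hc0 : In (nth 0 c 0) c).
{ destruct Hcy as [HL _]. apply nth_In. lia. }
pose proof (Hc v (nth 0 c 0) Hv (cycle_in_lt G c _ Hcy Hc0)) as H.
apply clos_rt_rt1n in H. clear Hv. revert Hc0. induction H as [x|x y z Hxy Hyz IH]; intros Hc0.
- exists 0. exact Hc0.
- destruct (IH Hc0) as [k Hk]. exists (S k). simpl. exists y. auto.
Qed.

Lemma phi_exists (G : graph) (c : list nat) :
  connected G -> is_cycle G c ->
  exists phi : nat -> nat, forall v, v < gn G -> edge G v (phi v) /\ phi (phi v) <> v.
Proof.
intros Hconn Hcy.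
assert (Hd : forall v, exists d, v < gn G -> reach G c d v /\ forall j, reach G c j v -> d <= j).
{ intros v. destruct (classic (v < gn G)) as [Hv|Hv].
  - destruct (min_ex _ (reach_ex G c v Hconn Hcy Hv)) as [d Hd]. exists d. auto.
  - exists 0. intros; contradiction. }
apply fun_choice in Hd. destruct Hd as [d Hd].
set (L := length c).
assert (HL : 3 <= L) by (destruct Hcy; auto).
assert (HND : NoDup c) by (destruct Hcy as [_ [H _]]; auto).
assert (Hed : forall i, i < L -> edge G (nth i c 0) (nth ((i + 1) mod L) c 0))
  by (destruct Hcy as [_ [_ H]]; auto).
assert (Hd0 : forall v, v < gn G -> In v c -> d v = 0).
{ intros v Hv Hin. destruct (Hd v Hv) as [_ Hm]. specialize (Hm 0 Hin). lia. }
assert (Hd0' : forall v, v < gn G -> d v = 0 -> In v c).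
{ intros v Hv E. destruct (Hd v Hv) as [Hr _]. rewrite E in Hr. exact Hr. }
assert (Hphi : forall v, exists w, v < gn G -> edge G v w /\
   (d v = 0 -> exists i, i < L /\ nth i c 0 = v /\ w = nth ((i+1) mod L) c 0) /\
   (d v <> 0 -> d w = d v - 1)).
{ intros v. destruct (classic (v < gn G)) as [Hv|Hv]; [|exists 0; intros; contradiction].
  destruct (d v) as [|k] eqn:E.
  - destruct (In_nth _ _ 0 (Hd0' v Hv E)) as [i [Hi Hiv]].
    exists (nth ((i+1) mod L) c 0). intros _. split.
    + rewrite <- Hiv. apply Hed. exact Hi.
    + split; [|intros; lia]. intros _. exists i. auto.
  - destruct (Hd v Hv) as [Hr Hm]. rewrite E in Hr. destruct Hr as [w [Hvw Hw]].
    exists w. intros _. split; [exact Hvw|]. split; [intros; discriminate|].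
    intros _. assert (Hw' : w < gn G) by (destruct Hvw as [_ [H _]]; exact H).
    destruct (Hd w Hw') as [Hrw Hmw]. specialize (Hmw k Hw).
    assert (reach G c (S (d w)) v) by (simpl; exists w; auto).
    specialize (Hm _ H). lia. }
apply fun_choice in Hphi. destruct Hphi as [phi Hphi].
exists phi. intros v Hv.
destruct (Hphi v Hv) as [Hvw [Hz Hnz]].
split; [exact Hvw|].
set (w := phi v) in *.
assert (Hw : w < gn G) by (destruct Hvw as [_ [H _]]; exact H).
destruct (Hphi w Hw) as [Hww [Hzw Hnzw]].
destruct (Nat.eq_dec (d v) 0) as [E|E].
- destruct (Hz E) as [i [Hi [Hiv Hwi]]].
  assert (Hwin : In w c) by (rewrite Hwi; apply nth_In; apply Nat.mod_upper_bound; lia).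
  destruct (Hzw (Hd0 w Hw Hwin)) as [i' [Hi' [Hiw Hpw]]].
  assert (Ei : i' = (i+1) mod L).
  { apply (proj1 (NoDup_nth c 0) HND); [exact Hi'|apply Nat.mod_upper_bound; lia|].
    rewrite Hiw. exact Hwi. }
  intros Heq. rewrite Heq in Hpw. rewrite <- Hiv in Hpw.
  assert (i = (i'+1) mod L).
  { apply (proj1 (NoDup_nth c 0) HND); [exact Hi|apply Nat.mod_upper_bound; lia|exact Hpw]. }
  subst i'. apply (mod_step L i HL Hi). auto.
- specialize (Hnz E).
  destruct (Nat.eq_dec (d w) 0) as [E2|E2].
  + destruct (Hzw E2) as [i [Hi [_ Hpw]]]. intros Heq.
    apply E. apply Hd0; [exact Hv|]. rewrite <- Heq, Hpw. apply nth_In. apply Nat.mod_upper_bound; lia.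
  + specialize (Hnzw E2). intros Heq. rewrite Heq in Hnzw. lia.
Qed.


Lemma cycle_len_ge4 G c : bipartite G -> is_cycle G c -> 4 <= length c.
Proof.
intros [col Hcol] [HL [HN He]].
destruct (Nat.eq_dec (length c) 3) as [E|E]; [|lia].
exfalso.
pose proof (Hcol _ _ (He 0 ltac:(lia))) as H0.
pose proof (Hcol _ _ (He 1 ltac:(lia))) as H1.
pose proof (Hcol _ _ (He 2 ltac:(lia))) as H2.
rewrite E in H0, H1, H2. simpl in H0, H1, H2.
destruct (col (nth 0 c 0)), (col (nth 1 c 0)), (col (nth 2 c 0)); congruence.
Qed.

Lemma cycle_len_le G c : is_cycle G c -> length c <= gn G.
Proof.
intros Hcy. pose proof Hcy as [HL [HN He]].
replace (gn G) with (length (seq 0 (gn G))) by apply length_seq.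
apply NoDup_incl_length; [exact HN|]. intros x Hx. apply in_seq.
destruct (In_nth _ _ 0 Hx) as [i [Hi <-]]. destruct (He i Hi) as [H _]. lia.
Qed.

Lemma iso4 G c : simple_graph G -> bipartite G -> is_cycle G c -> gn G = 4 ->
  isomorphic G C4.
Proof.
intros [Hsym Hirr] Hbip Hcy Hn.
pose proof (cycle_len_ge4 G c Hbip Hcy). pose proof (cycle_len_le G c Hcy).
assert (Hall : forall u, u < 4 -> In u c).
{ intros u Hu. apply (NoDup_length_incl (l:=c) (l':=seq 0 4)).
  - destruct Hcy as [_ [HN _]]; exact HN.
  - simpl; lia.
  - intros x Hx. apply in_seq. destruct Hcy as [_ [_ He]].
    destruct (In_nth _ _ 0 Hx) as [i [Hi <-]]. destruct (He i Hi) as [Hx' _]. lia.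
  - apply in_seq; lia. }
destruct Hbip as [col Hcol].
destruct Hcy as [HL [HN He]].
destruct c as [|c0 [|c1 [|c2 [|c3 [|c4 c']]]]]; simpl in *; try lia.
pose proof (He 0 ltac:(lia)) as E0. pose proof (He 1 ltac:(lia)) as E1.
pose proof (He 2 ltac:(lia)) as E2. pose proof (He 3 ltac:(lia)) as E3.
simpl in E0, E1, E2, E3.
destruct E0 as [h0 [h1 g01]]. destruct E1 as [_ [h2 g12]].
destruct E2 as [_ [h3 g23]]. destruct E3 as [_ [_ g30]].
assert (K01 := Hcol c0 c1 (conj h0 (conj h1 g01))).
assert (K12 := Hcol c1 c2 (conj h1 (conj h2 g12))).
assert (K23 := Hcol c2 c3 (conj h2 (conj h3 g23))).
assert (g02 : gadj G c0 c2 = false).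
{ destruct (gadj G c0 c2) eqn:X; [|reflexivity]. exfalso.
  pose proof (Hcol c0 c2 (conj h0 (conj h2 X))).
  destruct (col c0), (col c1), (col c2); congruence. }
assert (g13 : gadj G c1 c3 = false).
{ destruct (gadj G c1 c3) eqn:X; [|reflexivity]. exfalso.
  pose proof (Hcol c1 c3 (conj h1 (conj h3 X))).
  destruct (col c1), (col c2), (col c3); congruence. }
inversion HN as [|? ? N0 HN1]; subst. inversion HN1 as [|? ? N1 HN2]; subst.
inversion HN2 as [|? ? N2 HN3]; subst.
simpl in N0, N1, N2.
set (f := fun u => if u =? c0 then 0 else if u =? c1 then 1 else if u =? c2 then 2 else 3).
assert (f0 : f c0 = 0) by (unfold f; rewrite Nat.eqb_refl; reflexivity).
assert (f1 : f c1 = 1).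
{ unfold f. destruct (Nat.eqb_spec c1 c0); [exfalso; apply N0; auto|]. rewrite Nat.eqb_refl. reflexivity. }
assert (f2 : f c2 = 2).
{ unfold f. destruct (Nat.eqb_spec c2 c0); [exfalso; apply N0; auto|].
  destruct (Nat.eqb_spec c2 c1); [exfalso; apply N1; auto|]. rewrite Nat.eqb_refl. reflexivity. }
assert (f3 : f c3 = 3).
{ unfold f. destruct (Nat.eqb_spec c3 c0); [exfalso; apply N0; auto|].
  destruct (Nat.eqb_spec c3 c1); [exfalso; apply N1; auto|].
  destruct (Nat.eqb_spec c3 c2); [exfalso; apply N2; auto|]. reflexivity. }
assert (Hcase : forall u, u < 4 -> u = c0 \/ u = c1 \/ u = c2 \/ u = c3).
{ intros u Hu. destruct (Hall u Hu) as [Y|[Y|[Y|[Y|[]]]]]; auto. }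
split; [exact Hn|]. exists f. rewrite Hn. split; [|split].
- intros u Hu. simpl. unfold f. destruct (u =? c0); [lia|]. destruct (u =? c1); [lia|].
  destruct (u =? c2); lia.
- intros u v Hu Hv Huv.
  destruct (Hcase u Hu) as [ -> | [ -> | [ -> | -> ] ] ]; destruct (Hcase v Hv) as [ -> | [ -> | [ -> | -> ] ] ];
  try reflexivity; rewrite ?f0, ?f1, ?f2, ?f3 in Huv; discriminate.
- intros u v Hu Hv.
  destruct (Hcase u Hu) as [ -> | [ -> | [ -> | -> ] ] ]; destruct (Hcase v Hv) as [ -> | [ -> | [ -> | -> ] ] ];
  rewrite ?f0, ?f1, ?f2, ?f3; simpl;
  rewrite ?Hirr by lia; auto;
  try (rewrite Hsym by lia; auto; fail).
Qed.

End Graph.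

Section Det4.
Local Open Scope R_scope.

Lemma det_S' m M : det (S m) M = fold_right Rplus 0
  (map (fun j => (-1) ^ j * M O j * det m (minor M j)) (seq 0 (S m))).
Proof. reflexivity. Qed.

Lemma det_ext n (M M' : nat -> nat -> R) :
  (forall i j, (i < n)%nat -> (j < n)%nat -> M i j = M' i j) -> det n M = det n M'.
Proof.
revert M M'. induction n as [|m IH]; intros M M' H; [reflexivity|].
rewrite !det_S'. f_equal. apply map_ext_in. intros j Hj. apply in_seq in Hj.
rewrite (H 0%nat j) by lia. f_equal. apply IH. intros r c Hr Hc. unfold minor.
apply H; [lia|]. destruct (Nat.ltb_spec c j); lia.
Qed.

Lemma charpoly_C4iso G x : isomorphic G C4 ->
  charpoly_at (gn G) (adj_matrix G) x =
  fold_right Rmult 1 (map (fun l => x - l) (2 :: -2 :: 0 :: 0 :: nil)).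
Proof.
intros [Hn [f [Hf [Hinj Hadj]]]]. simpl in Hn.
unfold charpoly_at. rewrite Hn.
rewrite (det_ext 4 _ (fun i j => (if (i =? j)%nat then x else 0) -
   (if gadj C4 (f i) (f j) then 1 else 0))).
2:{ intros i j Hi Hj. unfold adj_matrix. rewrite Hadj by lia. reflexivity. }
rewrite Hn in Hf, Hinj. simpl in Hf.
assert (F0 := Hf 0%nat ltac:(lia)). assert (F1 := Hf 1%nat ltac:(lia)).
assert (F2 := Hf 2%nat ltac:(lia)). assert (F3 := Hf 3%nat ltac:(lia)).
assert (I01 : f 0%nat <> f 1%nat) by (intros E; apply Hinj in E; lia).
assert (I02 : f 0%nat <> f 2%nat) by (intros E; apply Hinj in E; lia).
assert (I03 : f 0%nat <> f 3%nat) by (intros E; apply Hinj in E; lia).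
assert (I12 : f 1%nat <> f 2%nat) by (intros E; apply Hinj in E; lia).
assert (I13 : f 1%nat <> f 3%nat) by (intros E; apply Hinj in E; lia).
assert (I23 : f 2%nat <> f 3%nat) by (intros E; apply Hinj in E; lia).
simpl det. unfold minor. simpl.
destruct (f 0%nat) as [|[|[|[|]]]]; try lia;
destruct (f 1%nat) as [|[|[|[|]]]]; try lia;
destruct (f 2%nat) as [|[|[|[|]]]]; try lia;
destruct (f 3%nat) as [|[|[|[|]]]]; try lia; simpl; ring.
Qed.

End Det4.

From mathcomp Require Import all_boot all_algebra.
From mathcomp Require Import Rstruct.
From mathcomp Require Import ring.
Import GRing.Theory Num.Theory.

Section MC.
Local Open Scope ring_scope.

Lemma det_S m M : det (S m) M = fold_right Rplus 0%R
  (map (fun j => Rmult (Rmult (pow (-1)%R j) (M O j)) (det m (minor M j))) (List.seq 0 (S m))).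
Proof. reflexivity. Qed.

Lemma seq_iota s l : List.seq s l = iota s l.
Proof. by elim: l s => //= l IH s; rewrite IH. Qed.

Lemma fold_sum (T : Type) (F : T -> R) (s : list T) :
  fold_right Rplus 0%R (map F s) = \sum_(x <- s) F x.
Proof. by elim: s => [|a s IH] /=; rewrite ?big_nil ?big_cons ?IH. Qed.

Lemma fold_prod (T : Type) (F : T -> R) (s : list T) :
  fold_right Rmult 1%R (map F s) = \prod_(x <- s) F x.
Proof. by elim: s => [|a s IH] /=; rewrite ?big_nil ?big_cons ?IH. Qed.

Lemma ltb_ltn (a b : nat) : Nat.ltb a b = (a < b)%N.
Proof. case: (Nat.ltb_spec a b) => H; apply/esym; [apply/ltP | apply/negbTE/negP => /ltP]; lia. Qed.

Lemma det_bridge n (M : nat -> nat -> R) :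
  det n M = \det (\matrix_(i < n, j < n) M i j).
Proof.
elim: n M => [|m IH] M; first by rewrite det_mx00.
rewrite det_S fold_sum seq_iota (expand_det_row _ ord0) -/(index_iota 0 m.+1) big_mkord.
apply: eq_bigr => j _.
rewrite /cofactor IH mxE add0n RpowE RmultE RmultE.
have -> : row' ord0 (col' j (\matrix_(i, j0) M i j0)) = \matrix_(i < m, j0 < m) minor M j i j0.
  apply/matrixP => r c; rewrite !mxE /minor /= /bump /= ltb_ltn.
  by rewrite add1n; case: ltnP.
by rewrite mulrCA mulrA.
Qed.

Lemma poly_eq_inj (p q : {poly R}) (g : nat -> R) : injective g ->
  (forall k, p.[g k] = q.[g k]) -> p = q.
Proof.
move=> ginj H; apply/eqP; rewrite -subr_eq0; apply/eqP.
apply: (@roots_geq_poly_eq0 _ _ [seq g i | i <- iota 0 (size (p - q))]).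
- by apply/allP => _ /mapP [k _ ->]; rewrite /root hornerD hornerN H subrr.
- by rewrite map_inj_uniq // iota_uniq.
- by rewrite size_map size_iota.
Qed.

Lemma nat_inj : injective (fun k : nat => k%:R : R).
Proof. by move=> a b /eqP; rewrite eqr_nat => /eqP. Qed.

Lemma char_poly_eval n (A : 'M[R]_n) x : (char_poly A).[x] = \det (x%:M - A).
Proof.
rewrite -horner_evalE /char_poly -det_map_mx; congr (\det _).
apply/matrixP => i j; rewrite !mxE /= horner_evalE hornerD hornerN hornerMn hornerX hornerC.
by [].
Qed.

Lemma eqb_eqn (a b : nat) : Nat.eqb a b = (a == b).
Proof. by case: (Nat.eqb_spec a b) => H; apply/esym; [apply/eqP | apply/eqP]. Qed.

Definition AG (G : graph) : 'M[R]_(gn G) := \matrix_(i, j) adj_matrix G i j.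

Lemma size_length (T : Type) (s : list T) : size s = length s.
Proof. by elim: s => //= a s ->. Qed.

Lemma spec_eval G lam : is_spectrum (gn G) (adj_matrix G) lam ->
  forall x, \det (x%:M - AG G) = \prod_(l <- lam) (x - l).
Proof.
move=> [_ H] x; have := H x; rewrite /charpoly_at det_bridge fold_prod => <-.
congr (\det _); apply/matrixP => i j; rewrite !mxE eqb_eqn.
have -> : ((i:nat) == j) = (i == j) by [].
by case: (i == j).
Qed.

Lemma spec_charpoly G lam : is_spectrum (gn G) (adj_matrix G) lam ->
  char_poly (AG G) = \prod_(l <- lam) ('X - l%:P).
Proof.
move=> Hs; apply: (@poly_eq_inj _ _ (fun k : nat => k%:R)); first exact: nat_inj.
move=> k.
by rewrite char_poly_eval (spec_eval _ _ Hs) horner_prod; apply: eq_bigr => l _; rewrite hornerXsubC.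
Qed.

Lemma prod_neg (s : seq R) (F : R -> R) :
  \prod_(l <- s) (- F l) = (-1) ^+ (size s) * \prod_(l <- s) F l.
Proof.
elim: s => [|a s IH]; first by rewrite !big_nil expr0 mulr1.
by rewrite !big_cons IH exprS /=; ring.
Qed.

Lemma det_plus_eval G lam : is_spectrum (gn G) (adj_matrix G) lam ->
  forall x, \det (x%:M + AG G) = \prod_(l <- lam) (x + l).
Proof.
move=> Hs x.
have -> : x%:M + AG G = (-1) *: ((- x)%:M - AG G).
  apply/matrixP => i j; rewrite !mxE mulNrn; ring.
rewrite detZ (spec_eval _ _ Hs).
have -> : gn G = size lam by case: Hs => H _; rewrite size_length H.
rewrite -prod_neg; apply: eq_bigr => l _; ring.
Qed.

Lemma det_sym G x : simple_graph G -> bipartite G ->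
  \det (x%:M + AG G) = \det (x%:M - AG G).
Proof.
move=> [Hsym Hirr] [col Hcol].
pose s (i : nat) : R := if col i then 1 else -1.
have Hss : forall i, s i * s i = 1 by move=> i; rewrite /s; case: (col i); ring.
have HA : forall i j : 'I_(gn G), s i * adj_matrix G i j * s j = - adj_matrix G i j.
  move=> i j; rewrite /adj_matrix.
  have Hi : (i < gn G)%coq_nat by apply/ltP.
  have Hj : (j < gn G)%coq_nat by apply/ltP.
  case E: (gadj G i j); rewrite ?R0E ?R1E; last by ring.
  have := Hcol i j (conj Hi (conj Hj E)); rewrite /s.
  by case: (col i); case: (col j) => // _; ring.
pose D := diag_mx (\row_(i < gn G) s i).
have HD : D *m (x%:M - AG G) *m D = x%:M + AG G.
  apply/matrixP => i j; rewrite mul_mx_diag mul_diag_mx !mxE.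
  case: (eqVneq i j) => [<-|ne]; last first.
    by rewrite mulr0n sub0r add0r mulrN mulNr HA opprK.
  by rewrite mulr1n mulrBr mulrBl HA opprK mulrAC Hss mul1r.
have HDD : \det D * \det D = 1.
  rewrite /D det_diag -big_split /=; apply: big1 => i _; rewrite !mxE; exact: Hss.
by rewrite -HD !det_mulmx mulrC mulrA HDD mul1r.
Qed.

Lemma lam_perm G lam : simple_graph G -> bipartite G ->
  is_spectrum (gn G) (adj_matrix G) lam -> perm_eq lam (map (fun l => - l) lam).
Proof.
move=> Hsg Hb Hs; apply: prod_XsubC_eq.
apply: (@poly_eq_inj _ _ (fun k : nat => k%:R)); first exact: nat_inj.
move=> k; rewrite !horner_prod big_map.
transitivity (\det ((k%:R : R)%:M - AG G)).
  by rewrite (spec_eval _ _ Hs); apply: eq_bigr => l _; rewrite hornerXsubC.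
rewrite -det_sym // (det_plus_eval _ _ Hs); apply: eq_bigr => l _.
by rewrite hornerXsubC opprK.
Qed.

Lemma mx_sq n (A : 'M[R]_n) x : (x%:M - A) *m (x%:M + A) = (x ^+ 2)%:M - A *m A.
Proof.
rewrite mulmxBl !mulmxDr mul_scalar_mx mul_mx_scalar scale_scalar_mx expr2.
by rewrite opprD addrA mul_scalar_mx addrK.
Qed.

Lemma sq_inj : injective (fun k : nat => (k%:R : R) ^+ 2).
Proof. by move=> a b /= /eqP; rewrite -!natrX eqr_nat eqn_sqr => /eqP. Qed.

Lemma trace_sq G lam : is_spectrum (gn G) (adj_matrix G) lam -> (0 < gn G)%N ->
  \sum_(l <- lam) l ^+ 2 = \tr (AG G *m AG G).
Proof.
move=> Hs Hn.
have Hsz : gn G = size lam by case: Hs => H _; rewrite size_length H.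
have HP : char_poly (AG G *m AG G) = \prod_(p <- map (fun l => l ^+ 2) lam) ('X - p%:P).
  apply: (@poly_eq_inj _ _ (fun k : nat => (k%:R : R) ^+ 2)); first exact: sq_inj.
  move=> k; rewrite char_poly_eval -mx_sq det_mulmx (spec_eval _ _ Hs) (det_plus_eval _ _ Hs).
  rewrite horner_prod big_map -big_split /=; apply: eq_bigr => l _.
  by rewrite hornerXsubC; ring.
have := char_poly_trace (AG G *m AG G) Hn; rewrite HP.
have -> : (gn G).-1 = (size (map (fun l => l ^+ 2) lam)).-1 by rewrite size_map Hsz.
rewrite coefPn_prod_XsubC; last by rewrite size_map -Hsz -lt0n.
by rewrite big_map => /oppr_inj.
Qed.

Lemma sum_eq1 n k : (k < n)%N -> (\sum_(j < n) ((j : nat) == k) = 1)%N.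
Proof.
move=> hk; rewrite (bigD1 (Ordinal hk)) //= eqxx big1 // => j.
by rewrite -val_eqE /= => /negbTE ->.
Qed.

Lemma count_edges n (adj : nat -> nat -> bool) (phi : nat -> nat) :
  (forall u v, (u < n)%N -> (v < n)%N -> adj u v = adj v u) ->
  (forall v, (v < n)%N -> (phi v < n)%N /\ adj v (phi v) /\ phi (phi v) <> v) ->
  (2 * n <= \sum_(i < n) \sum_(j < n) adj i j)%N.
Proof.
move=> Hsym Hphi.
have H1 : forall i j : 'I_n, (((j : nat) == phi i) + (phi j == i) <= adj i j)%N.
  move=> i j; have [hpi [ai hpp]] := Hphi i (ltn_ord i).
  have [hpj [aj hppj]] := Hphi j (ltn_ord j).
  case: eqP => [E|N]; case: eqP => [E2|N2] //=.
  - by exfalso; apply: hpp; rewrite -E E2.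
  - by rewrite E ai.
  - by rewrite Hsym // -E2 aj.
apply: (@leq_trans (\sum_(i < n) \sum_(j < n) (((j : nat) == phi i) + (phi j == i)))%N); last first.
  by apply: leq_sum => i _; apply: leq_sum => j _; apply: H1.
have S1 : (\sum_(i < n) \sum_(j < n) ((j : nat) == phi i) = n)%N.
  rewrite (eq_bigr (fun _ => 1%N)) ?sum1_card ?card_ord // => i _.
  by apply: sum_eq1; case: (Hphi i (ltn_ord i)).
have S2 : (\sum_(i < n) \sum_(j < n) (phi j == i) = n)%N.
  rewrite exchange_big /= (eq_bigr (fun _ => 1%N)) ?sum1_card ?card_ord // => j _.
  under eq_bigr => i _ do rewrite eq_sym.
  by apply: sum_eq1; case: (Hphi j (ltn_ord j)).
have -> : (\sum_(i < n) \sum_(j < n) (((j : nat) == phi i) + (phi j == i)) =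
   \sum_(i < n) \sum_(j < n) ((j : nat) == phi i) + \sum_(i < n) \sum_(j < n) (phi j == i))%N.
  by rewrite -big_split /=; apply: eq_bigr => i _; rewrite big_split.
by rewrite S1 S2 mul2n addnn.
Qed.

Lemma trace_edges G : simple_graph G ->
  \tr (AG G *m AG G) = ((\sum_(i < gn G) \sum_(j < gn G) gadj G i j)%N)%:R.
Proof.
move=> [Hsym _]; rewrite /mxtrace natr_sum; apply: eq_bigr => i _.
rewrite mxE natr_sum; apply: eq_bigr => j _.
rewrite !mxE /adj_matrix Hsym; try by apply/ltP.
by case: (gadj G j i); rewrite ?R0E ?R1E ?mulr0 ?mulr1.
Qed.

End MC.


Section MC2.
Local Open Scope ring_scope.

Definition SC (s : seq R) : R := \sum_(l <- s) cosh l.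
Definition SE (s : seq R) : R := \sum_(l <- s) exp l.
Definition S2 (s : seq R) : R := \sum_(l <- s) l ^+ 2.

Lemma sum_lb (s : seq R) (a b : R) (f : R -> R) :
  (forall x, a + b * x ^+ 2 <= f x) -> a *+ size s + b * \sum_(l <- s) l ^+ 2 <= \sum_(l <- s) f l.
Proof.
move=> H; elim: s => [|x s IH]; first by rewrite !big_nil mulr0 addr0 mulr0n.
by rewrite !big_cons /= mulrS mulrDr addrACA; apply: lerD.
Qed.

Lemma SE_perm G lam : simple_graph G -> bipartite G ->
  is_spectrum (gn G) (adj_matrix G) lam -> \sum_(l <- lam) exp (- l) = SE lam.
Proof.
move=> Hsg Hb Hs; rewrite /SE (perm_big _ (lam_perm G lam Hsg Hb Hs)) big_map.
by apply: eq_bigr => l _; congr exp; rewrite ?RoppE; exact: opprK.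
Qed.

Lemma SC_SE lam : SC lam * 2%:R = SE lam + \sum_(l <- lam) exp (- l).
Proof.
rewrite /SC /SE -big_split mulr_suml; apply: eq_bigr => l _.
rewrite /cosh RdivE RplusE -mulrA mulVf ?mulr1 //.
by rewrite (_ : (IZR 2) = 2%:R) ?pnatr_eq0 // /= ; rewrite R1E; ring.
Qed.

Lemma S2_lb G lam c : simple_graph G -> connected G -> is_cycle G c ->
  is_spectrum (gn G) (adj_matrix G) lam -> (0 < gn G)%N ->
  ((2 * gn G)%N%:R : R) <= S2 lam.
Proof.
move=> Hsg Hc Hcy Hs Hn.
rewrite /S2 (trace_sq G lam Hs Hn) (trace_edges G Hsg) ler_nat.
have [phi Hphi] := phi_exists G c Hc Hcy.
apply: (count_edges _ _ phi).
- by move=> u v /ltP hu /ltP hv; case: Hsg => H _; apply: H.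
- move=> v /ltP hv; have [[_ [hp ha]] hpp] := Hphi v hv.
  by split; [apply/ltP | split].
Qed.

Lemma EE_perm n M (l1 l2 : list R) :
  (forall x, charpoly_at n M x = fold_right Rmult 1%R (map (fun l => Rminus x l) l1)) ->
  (forall x, charpoly_at n M x = fold_right Rmult 1%R (map (fun l => Rminus x l) l2)) ->
  estrada_of l1 = estrada_of l2.
Proof.
move=> H1 H2; rewrite /estrada_of !fold_sum; apply: perm_big.
apply: prod_XsubC_eq.
apply: (@poly_eq_inj _ _ (fun k : nat => k%:R)); first exact: nat_inj.
move=> k; rewrite !horner_prod.
have := H1 k%:R; rewrite H2 !fold_prod => E.
transitivity (\prod_(l <- l2) (k%:R - l)); last first.
  by apply: eq_bigr => l _; rewrite hornerXsubC.
rewrite E; apply: eq_bigr => l _; rewrite hornerXsubC //.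
Qed.

Lemma two_R : (2%:R : R) = IZR 2.
Proof. rewrite -INRE /=; lra. Qed.

End MC2.

Open Scope R_scope.

Lemma SC_lb lam : 5/6 * INR (size lam) + 2/3 * S2 lam <= SC lam.
Proof.
have := sum_lb lam (5/6) (2/3) cosh.
move=> H; apply/RleP; rewrite INRE RmultE mulr_natr; apply: H => x.
apply/RleP; rewrite -RpowE; exact: cosh_bound.
Qed.

Theorem mainTheorem13 (G : graph) (lam : list R) :
  simple_graph G -> unicyclic G -> bipartite G ->
  is_spectrum (gn G) (adj_matrix G) lam ->
  estrada_of lam >= 2 * cosh 2 + (INR (gn G) - 2) /\
  (estrada_of lam = 2 * cosh 2 + (INR (gn G) - 2) <-> isomorphic G C4).
Proof.
intros Hsg Hu Hb Hs.
destruct Hu as [Hconn [c [Hcy _]]].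
pose proof (cycle_len_ge4 G c Hb Hcy) as Hc4. pose proof (cycle_len_le G c Hcy) as Hcl.
assert (Hsz : length lam = gn G) by (destruct Hs; auto).
pose proof cosh2_bound as Hcb. unfold cosh. replace (exp (- (2))) with (exp (-2)) by (f_equal; lra).
destruct (Nat.eq_dec (gn G) 4) as [H4|H5].
- assert (Hiso : isomorphic G C4) by (apply (iso4 G c); auto).
  assert (HE : estrada_of lam = estrada_of (2 :: -2 :: 0 :: 0 :: nil)).
  { apply (EE_perm (gn G) (adj_matrix G)); intros x.
    - apply Hs.
    - apply charpoly_C4iso; exact Hiso. }
  unfold estrada_of at 2 in HE; simpl in HE. rewrite exp_0 in HE.
  rewrite H4. replace (INR 4) with 4 by (simpl; lra).
  split; [lra|]. split; intros; [exact Hiso| lra].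
- assert (HEE : estrada_of lam = SC lam).
  { have h1 := SC_SE lam. rewrite (SE_perm G lam Hsg Hb Hs) two_R in h1.
    rewrite -RplusE -RmultE in h1.
    unfold estrada_of. rewrite fold_sum. fold (SE lam). lra. }
  assert (HS2 : 2 * INR (gn G) <= S2 lam).
  { have h := S2_lb G lam c Hsg Hconn Hcy Hs ltac:(apply/ltP; lia).
    move/RleP: h. rewrite -INRE mult_INR. simpl (INR 2). intros; lra. }
  assert (HSC := SC_lb lam). rewrite size_length Hsz in HSC.
  assert (Hn5 : 5 <= INR (gn G)).
  { replace 5 with (INR 5) by (simpl; lra). apply le_INR. lia. }
  split; [lra|]. split; intros H; [lra|].
  destruct H as [Hn _]. simpl in Hn. lia.
Qed.
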